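(* For every $\delta^0$-maderian digraph $F$, $\mathrm{mad}_{\vec{\chi}}(F)\leq \mathrm{mad}_{\delta^0}(F)+1$.
   Context: $\vec{\chi}(D)$ is the dichromatic number (least $k$ such that $V(D)$ partitions into $k$ sets inducing acyclic subdigraphs); $\delta^0(D)=\min\{\delta^+(D),\delta^-(D)\}$ (minimum of minimum out- and in-degree). A subdivision of $F$ is obtained by replacing each arc $(x,y)$ by a directed $(x,y)$-path, internally disjoint with new internal vertices. For a parameter $\gamma$, $F$ is $\gamma$-maderian if some integer $c$ exists such that every digraph $D$ with $\gamma(D)\ge c$ contains a subdivision of $F$ as a subdigraph; $\mathrm{mad}_\gamma(F)$ is the least such $c$. *)

(* Defs.v *)
From mathcomp Require Import all_boot.
From mathcomp Require Import boolp classical_sets.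

Set Implicit Arguments.
Unset Strict Implicit.
Unset Printing Implicit Defensive.

(* A (finite) digraph: finite vertex set, arc relation, no loops.
   Using a relation means no parallel arcs; digons (x->y and y->x) are allowed. *)
Record digraph := Digraph {
  dvert :> finType;
  darc : rel dvert;
  darc_irr : irreflexive darc }.

Section DigraphDefs.
Variable D : digraph.

Definition outdeg (x : D) : nat := #|[set y : D | darc x y]|.
Definition indeg (x : D) : nat := #|[set y : D | darc y x]|.

(* delta^0(D) = min (min out-degree, min in-degree); 0 for the empty digraph. *)
Definition delta0 : nat := \big[minn/#|D|]_(x : D) minn (outdeg x) (indeg x).

Definition acyclic_in (S : pred D) : Prop :=
  forall s : seq D, s != [::] -> all S s -> ~~ path.cycle (@darc D) s.

Definition dicolorable (k : nat) : Prop :=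
  exists f : D -> 'I_k, forall i : 'I_k, acyclic_in [pred x | f x == i].

Definition dichromatic : nat :=
  xget 0%N [set k | dicolorable k /\ forall j, dicolorable j -> (k <= j)%N].

End DigraphDefs.

(* D contains a subdivision of F as a subdigraph: an injective map phi of the
   vertices of F into D, and for each arc (x,y) of F a directed (phi x, phi y)-path
   in D whose list of internal vertices is P x y; internal vertices are distinct,
   avoid phi(V(F)), and the paths of distinct arcs are internally disjoint. *)
Definition contains_subdivision (F D : digraph) : Prop :=
  exists (phi : F -> D) (P : F -> F -> seq D),
    injective phi /\
    (forall x y : F, @darc F x y ->
       [/\ path (@darc D) (phi x) (rcons (P x y) (phi y)),
           uniq (P x y) &
           forall z : F, phi z \notin P x y]) /\
    (forall x y x' y' : F, @darc F x y -> @darc F x' y' -> (x, y) != (x', y') ->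
       [disjoint P x y & P x' y']).

Definition mad_bound (gamma : digraph -> nat) (F : digraph) (c : nat) : Prop :=
  forall D : digraph, (c <= gamma D)%N -> contains_subdivision F D.

Definition maderian (gamma : digraph -> nat) (F : digraph) : Prop :=
  exists c, mad_bound gamma F c.

(* mad_gamma(F): least c such that mad_bound gamma F c (0 if F is not gamma-maderian) *)
Definition mad (gamma : digraph -> nat) (F : digraph) : nat :=
  xget 0%N [set c | mad_bound gamma F c /\ forall c', mad_bound gamma F c' -> (c <= c')%N].

(* Main.v *)
Require Import Defs.
From mathcomp Require Import all_boot.
From mathcomp Require Import boolp classical_sets.

Set Implicit Arguments.
Unset Strict Implicit.
Unset Printing Implicit Defensive.

Lemma least_ex (P : nat -> Prop) :
  (exists n, P n) -> exists n, P n /\ forall j, P j -> (n <= j)%N.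
Proof.
move=> ex.
have exb : exists n, (fun n => `[< P n >]) n.
  by case: ex => n Pn; exists n; apply/asboolP.
case: (ex_minnP exb) => n /asboolP Pn Hmin; exists n; split => // j Pj.
by apply: Hmin; apply/asboolP.
Qed.

Lemma xget_least (P : nat -> Prop) :
  (exists n, P n) ->
  P (xget 0%N [set k | P k /\ forall j, P j -> (k <= j)%N]) /\
  forall j, P j -> (xget 0%N [set k | P k /\ forall j, P j -> (k <= j)%N] <= j)%N.
Proof.
move=> /least_ex [n [Pn Hn]].
rewrite (@xget_subset1 _ 0%N _ n); first by split.
- by split.
- move=> a b [Pa Ha] [Pb Hb]; apply/eqP; rewrite eqn_leq Ha // Hb //.
Qed.

Section Sub.
Variable D : digraph.

Definition colorable_on (m : nat) (S : {set D}) : Prop :=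
  exists f : D -> 'I_m, forall i : 'I_m, acyclic_in [pred x | (x \in S) && (f x == i)].

Definition degprop (m : nat) (T : {set D}) : Prop :=
  forall x, x \in T -> (m <= #|[set y in T | darc x y]|)%N /\ (m <= #|[set y in T | darc y x]|)%N.

Lemma crit_sub (m : nat) : forall n (S : {set D}), #|S| = n -> ~ colorable_on m S ->
  exists T : {set D}, T \subset S /\ ~ colorable_on m T /\ degprop m T.
Proof.
elim/ltn_ind => n IH S HS Hnc.
case: (pselect (degprop m S)) => Hdeg.
  by exists S; split => //; split.
have [x [xS Hx]] : exists x, x \in S /\
   ((#|[set y in S | darc x y]| < m)%N \/ (#|[set y in S | darc y x]| < m)%N).
  apply: contrapT => Hne; apply: Hdeg => x xS.
  case: (leqP m #|[set y in S | darc x y]|) => h1;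
  case: (leqP m #|[set y in S | darc y x]|) => h2 //; exfalso; apply: Hne; exists x; tauto.
set S' := S :\ x.
have cS' : (#|S'| < n)%N by rewrite -HS (cardsD1 x S) xS.
case: (pselect (colorable_on m S')) => HS'; last first.
  have [T HT] := IH _ cS' S' erefl HS'.
  case: HT => sT1 rest.
  exists T; split; last exact: rest.
  apply/fintype.subsetP => z zT; have := fintype.subsetP sT1 z zT; by rewrite /S' !inE => /andP [_ ->].
exfalso; apply: Hnc.
case: HS' => f Hf.
case: Hx => Hx.
-
  have [c Hc] : exists c : 'I_m, forall y, y \in S -> darc x y -> f y != c.
    apply: contrapT => H.
    have sub : [set: 'I_m] \subset f @: [set y in S | darc x y].
      apply/fintype.subsetP => c _.
      apply: contrapT => Hn; apply: H; exists c => y yS xy.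
      apply/negP => /eqP fy; apply: Hn; apply/imsetP; exists y => //.
      by rewrite inE yS.
    have := subset_leq_card sub; rewrite cardsT card_ord.
    move=> h; have := leq_trans h (leq_imset_card _ _).
    by rewrite leqNgt Hx.
  exists (fun y => if y == x then c else f y) => i s sn /allP Hall.
  apply/negP => cyc.
  case: (boolP (x \in s)) => xs.
  + have e := next_cycle cyc xs.
    have nx : next s x \in s by rewrite mem_next.
    have := Hall _ nx; rewrite inE => /andP [nS].
    have := Hall _ xs; rewrite inE eqxx => /andP [_ /eqP ci].
    have nnx : next s x != x.
      by apply/eqP => h; move: e; rewrite h darc_irr.
    rewrite (negbTE nnx) => /eqP fy.
    by have := Hc _ nS e; rewrite fy ci eqxx.
  + suff Hs : all [pred y in S' | f y == i] s by have := Hf i s sn Hs; rewrite cyc.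
    apply/allP => y ys; have := Hall _ ys; rewrite !inE.
    have yx : y != x by apply/eqP => h; move: xs; rewrite -h ys.
    by rewrite (negbTE yx) /= => /andP [-> ->]; rewrite andbT.
- have [c Hc] : exists c : 'I_m, forall y, y \in S -> darc y x -> f y != c.
    apply: contrapT => H.
    have sub : [set: 'I_m] \subset f @: [set y in S | darc y x].
      apply/fintype.subsetP => c _.
      apply: contrapT => Hn; apply: H; exists c => y yS xy.
      apply/negP => /eqP fy; apply: Hn; apply/imsetP; exists y => //.
      by rewrite inE yS.
    have := subset_leq_card sub; rewrite cardsT card_ord.
    move=> h; have := leq_trans h (leq_imset_card _ _).
    by rewrite leqNgt Hx.
  exists (fun y => if y == x then c else f y) => i s sn /allP Hall.
  apply/negP => cyc.
  case: (boolP (x \in s)) => xs.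
  + have e := prev_cycle cyc xs.
    have nx : prev s x \in s by rewrite mem_prev.
    have := Hall _ nx; rewrite inE => /andP [nS].
    have := Hall _ xs; rewrite inE eqxx => /andP [_ /eqP ci].
    have nnx : prev s x != x.
      by apply/eqP => h; move: e; rewrite h darc_irr.
    rewrite (negbTE nnx) => /eqP fy.
    by have := Hc _ nS e; rewrite fy ci eqxx.
  + suff Hs : all [pred y in S' | f y == i] s by have := Hf i s sn Hs; rewrite cyc.
    apply/allP => y ys; have := Hall _ ys; rewrite !inE.
    have yx : y != x by apply/eqP => h; move: xs; rewrite -h ys.
    by rewrite (negbTE yx) /= => /andP [-> ->]; rewrite andbT.
Qed.

Variable T : {set D}.

Definition subrel : rel {x : D | x \in T} := fun x y => darc (val x) (val y).
Lemma subrel_irr : irreflexive subrel.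
Proof. by move=> x; rewrite /subrel darc_irr. Qed.
Definition subdg : digraph := @Digraph {x : D | x \in T} subrel subrel_irr.

Lemma path_val (x : {x : D | x \in T}) (p : seq {x : D | x \in T}) :
  path (@darc D) (val x) (map val p) = path (@darc subdg) x p.
Proof. by elim: p x => //= y p IH x; rewrite IH. Qed.

Lemma sub_contains (F : digraph) : contains_subdivision F subdg -> contains_subdivision F D.
Proof.
case=> phi [P [inj [H1 H2]]].
exists (fun z => val (phi z)), (fun x y => map val (P x y)); split.
  by move=> a b /val_inj /inj.
split.
  move=> x y xy; have [p u n] := H1 x y xy; split.
  - by rewrite -map_rcons path_val.
  - by rewrite map_inj_uniq //; exact: val_inj.
  - by move=> z; rewrite mem_map //; exact: val_inj.
move=> x y x' y' a b ne; have := H2 x y x' y' a b ne.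
move=> dj; rewrite disjoint_has; apply/hasPn => z /mapP [u uP ->] /=.
rewrite mem_map; [exact: (negbT (disjointFr dj uP)) | exact: val_inj].
Qed.

Lemma degprop_delta0 m : degprop m T -> (0 < m)%N -> (exists x, x \in T) -> (m <= delta0 subdg)%N.
Proof.
move=> Hd m0 [x0 x0T].
have outE (x : subdg) : #|[set y : subdg | darc x y]| = #|[set y in T | darc (val x) y]|.
  rewrite -(card_imset [set y : subdg | darc x y] val_inj); apply: eq_card => y; rewrite [in RHS]inE.
  apply/imsetP/andP => [[z]|[yT xy]]; first by rewrite inE => xz ->; rewrite (valP z).
  by exists (Sub y yT); rewrite ?inE //= SubK.
have inE' (x : subdg) : #|[set y : subdg | darc y x]| = #|[set y in T | darc y (val x)]|.
  rewrite -(card_imset [set y : subdg | darc y x] val_inj); apply: eq_card => y; rewrite [in RHS]inE.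
  apply/imsetP/andP => [[z]|[yT xy]]; first by rewrite inE => xz ->; rewrite (valP z).
  by exists (Sub y yT); rewrite ?inE //= SubK.
rewrite /delta0; apply: (big_ind (fun n => m <= n)%N).
- have [h _] := Hd _ x0T.
  apply: leq_trans h _.
  have := outE (Sub x0 x0T); rewrite SubK => <-; exact: max_card.
- by move=> a b ha hb; rewrite leq_min ha hb.
- move=> x _; have [h1 h2] := Hd _ (valP x).
  by rewrite leq_min /outdeg /indeg outE inE' h1 h2.
Qed.

End Sub.

Lemma acyc_ext (D : digraph) (S S' : pred D) : S =1 S' -> acyclic_in S -> acyclic_in S'.
Proof. by move=> e H s sn; rewrite -(eq_all e); apply: H. Qed.

Lemma dicolorable_card (D : digraph) : dicolorable D #|D|.
Proof.
exists (@enum_rank D) => i s sn /allP Hall; apply/negP.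
case: s sn Hall => // a s _ Hall.
have Ha : forall y, y \in a :: s -> y = a.
  move=> y ys; have := Hall _ ys; have := Hall _ (mem_head a s).
  by rewrite !inE => /eqP <- /eqP /enum_rank_inj.
rewrite /= rcons_path => /andP [_].
have := Ha (last a s) (mem_last a s) => ->.
by rewrite darc_irr.
Qed.

Lemma main_sub (D : digraph) m : ~ dicolorable D m ->
  exists T : {set D}, (m <= delta0 (subdg T))%N.
Proof.
case: m => [|m] Hnc.
  by exists [set: D]%SET.
have nc : ~ colorable_on m.+1 [set: D]%SET.
  case=> f Hf; apply: Hnc; exists f => i; apply: acyc_ext (Hf i) => y.
  by rewrite !inE.
have [T [_ [Tnc Td]]] := crit_sub (erefl _) nc.
exists T; apply: degprop_delta0 => //.
apply: contrapT => Hne; apply: Tnc.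
exists (fun _ => ord0) => i s sn /allP Hall; exfalso.
case: s sn Hall => // a s _ Hall; apply: Hne; exists a.
by have := Hall _ (mem_head a s); rewrite inE => /andP [].
Qed.

Lemma dich_spec (D : digraph) :
  dicolorable D (dichromatic D) /\ forall j, dicolorable D j -> (dichromatic D <= j)%N.
Proof.
apply: (@xget_least (dicolorable D)); exists #|D|; exact: dicolorable_card.
Qed.

Theorem corollary34 (F : digraph) :
  maderian delta0 F ->
  maderian dichromatic F /\ (mad dichromatic F <= mad delta0 F + 1)%N.
Proof.
move=> Hm.
have [Hc _] := @xget_least (mad_bound delta0 F) Hm.
rewrite -/(mad delta0 F) in Hc.
set c := mad delta0 F in Hc *.
have Hb : mad_bound dichromatic F (c + 1).
  move=> D HD.
  have nc : ~ dicolorable D c.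
    move=> Hcol; have [_ Hmin] := dich_spec D.
    have := leq_trans HD (Hmin _ Hcol); by rewrite addn1 ltnn.
  have [T HT] := main_sub nc.
  exact: sub_contains (Hc _ HT).
have ex : maderian dichromatic F by exists (c + 1).
split => //.
have [_ Hmin] := @xget_least (mad_bound dichromatic F) ex.
exact: Hmin.
Qed.
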